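(* For any NSP expressions $d$ and $e_i$ ($i\in\mathbb{N}$), $\langle\!\langle \mathtt{case}\ d\ \mathtt{of}\ (i\Rightarrow e_i)\rangle\!\rangle = d[i\mapsto e_i]$.
   Context: NSP terms are the possibly infinite syntax trees generated coinductively by: procedures $p::=\lambda x_0\cdots x_{r-1}.e$; expressions $d,e::=\bot\mid n\ (n\in\mathbb{N})\mid \mathtt{case}\ a\ \mathtt{of}\ (i\Rightarrow e_i\mid i\in\mathbb{N})$; applications $a::=x\,q_0\cdots q_{r-1}$ (modulo $\alpha$-equivalence). Meta-terms additionally allow ground forms $P\vec Q$ and $\mathtt{case}\ G\ \mathtt{of}(\ldots)$ with $G$ an arbitrary ground meta-term (including an expression); they reduce by the $\beta$-rule $(\lambda\vec x.E)\vec Q\rightsquigarrow E[\vec x\mapsto\vec Q]$, $\mathtt{case}\ \bot\ \mathtt{of}(\ldots)\rightsquigarrow\bot$, $\mathtt{case}\ n\ \mathtt{of}\ (i\Rightarrow E_i)\rightsquigarrow E_n$, $\mathtt{case}\ (\mathtt{case}\ G\ \mathtt{of}\ (i\Rightarrow E_i))\ \mathtt{of}\ (j\Rightarrow F_j)\rightsquigarrow \mathtt{case}\ G\ \mathtt{of}\ (i\Rightarrow\mathtt{case}\ E_i\ \mathtt{of}\ (j\Rightarrow F_j))$, applied in head position and recursively under $\lambda$, in arguments of $x\vec Q$ and in branches of $\mathtt{case}\ x\vec Q\ \mathtt{of}(\ldots)$; $\langle\!\langle T\rangle\!\rangle$ is the supremum (syntactic order, $\bot$ least) of the finite terms lying below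 some reduct of $T$. The rightward numeral leaves of a term are defined inductively: $n$ is one in itself; those of $e$ are ones of $\lambda\vec x.e$; those of each $e_i$ are ones of $\mathtt{case}\ a\ \mathtt{of}\ (i\Rightarrow e_i)$. For a term $t$ and expressions $e_i$, $t[i\mapsto e_i]$ denotes the result of replacing each rightward numeral leaf occurrence $i$ in $t$ by $e_i$. *)

(* Defs.v *)
(* Nested sequential procedures (NSPs) and meta-terms as
   coinductive syntax trees, with de Bruijn variables (alpha-equivalence is
   built in). *)
From Stdlib Require Import Arith Relations.

(* A variable is written (k, j): the j-th parameter x_j of the k-th enclosing
   lambda (k = 0 is the innermost one).  Argument lists q_0 ... q_{r-1} are
   stored as an arity r together with a function nat -> proc (values at
   indices >= r are irrelevant); branches (i => E_i), i in nat, are functions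
   nat -> exp. *)

CoInductive mproc : Type :=
  | MLam (r : nat) (body : mexp)
with mexp : Type :=
  | MBot
  | MNum (n : nat)
  | MCase (g : mexp) (br : nat -> mexp)
  | MVar (k j : nat) (r : nat) (args : nat -> mproc)
  | MApp (p : mproc) (r : nat) (args : nat -> mproc).

CoInductive nsp_p : mproc -> Prop :=
  | nsp_lam r e : nsp_e e -> nsp_p (MLam r e)
with nsp_e : mexp -> Prop :=
  | nsp_bot : nsp_e MBot
  | nsp_num n : nsp_e (MNum n)
  | nsp_case k j r a br :
      (forall i, i < r -> nsp_p (a i)) ->
      (forall i, nsp_e (br i)) ->
      nsp_e (MCase (MVar k j r a) br).

CoInductive le_p : mproc -> mproc -> Prop :=
  | le_lam r e e' : le_e e e' -> le_p (MLam r e) (MLam r e')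
with le_e : mexp -> mexp -> Prop :=
  | le_bot T : le_e MBot T
  | le_num n : le_e (MNum n) (MNum n)
  | le_case g g' br br' :
      le_e g g' -> (forall i, le_e (br i) (br' i)) ->
      le_e (MCase g br) (MCase g' br')
  | le_var k j r a a' :
      (forall i, i < r -> le_p (a i) (a' i)) ->
      le_e (MVar k j r a) (MVar k j r a')
  | le_app p p' r a a' :
      le_p p p' -> (forall i, i < r -> le_p (a i) (a' i)) ->
      le_e (MApp p r a) (MApp p' r a').

Inductive fin_p : mproc -> Prop :=
  | fin_lam r e : fin_e e -> fin_p (MLam r e)
with fin_e : mexp -> Prop :=
  | fin_bot : fin_e MBot
  | fin_num n : fin_e (MNum n)
  | fin_case g br :
      fin_e g -> (forall i, fin_e (br i)) ->
      (exists N, forall i, N <= i -> br i = MBot) ->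
      fin_e (MCase g br)
  | fin_var k j r a :
      (forall i, i < r -> fin_p (a i)) -> fin_e (MVar k j r a)
  | fin_app p r a :
      fin_p p -> (forall i, i < r -> fin_p (a i)) -> fin_e (MApp p r a).

CoFixpoint shift_p (c d : nat) (p : mproc) : mproc :=
  match p with MLam r e => MLam r (shift_e (S c) d e) end
with shift_e (c d : nat) (e : mexp) : mexp :=
  match e with
  | MBot => MBot
  | MNum n => MNum n
  | MCase g br => MCase (shift_e c d g) (fun i => shift_e c d (br i))
  | MVar k j r a =>
      MVar (if c <=? k then k + d else k) j r (fun i => shift_p c d (a i))
  | MApp p r a => MApp (shift_p c d p) r (fun i => shift_p c d (a i))
  end.

CoFixpoint subst_p (c : nat) (Q : nat -> mproc) (p : mproc) : mproc :=
  match p with MLam r e => MLam r (subst_e (S c) Q e) end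
with subst_e (c : nat) (Q : nat -> mproc) (e : mexp) : mexp :=
  match e with
  | MBot => MBot
  | MNum n => MNum n
  | MCase g br => MCase (subst_e c Q g) (fun i => subst_e c Q (br i))
  | MVar k j r a =>
      if k =? c then MApp (shift_p 0 c (Q j)) r (fun i => subst_p c Q (a i))
      else MVar (if c <? k then pred k else k) j r (fun i => subst_p c Q (a i))
  | MApp p r a => MApp (subst_p c Q p) r (fun i => subst_p c Q (a i))
  end.

Definition upd {A : Type} (f : nat -> A) (i : nat) (x : A) : nat -> A :=
  fun n => if n =? i then x else f n.

Inductive hred : mexp -> mexp -> Prop :=
  | hred_beta r E Q : hred (MApp (MLam r E) r Q) (subst_e 0 Q E)
  | hred_case_bot br : hred (MCase MBot br) MBot
  | hred_case_num n br : hred (MCase (MNum n) br) (br n)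
  | hred_case_case G E F :
      hred (MCase (MCase G E) F) (MCase G (fun i => MCase (E i) F))
  | hred_case_cong G G' br : hred G G' -> hred (MCase G br) (MCase G' br).

Inductive red_p : mproc -> mproc -> Prop :=
  | red_lam r E E' : red E E' -> red_p (MLam r E) (MLam r E')
with red : mexp -> mexp -> Prop :=
  | red_head E E' : hred E E' -> red E E'
  | red_var_arg k j r a i p' :
      red_p (a i) p' -> red (MVar k j r a) (MVar k j r (upd a i p'))
  | red_case_var_arg k j r a G' br :
      red (MVar k j r a) G' -> red (MCase (MVar k j r a) br) (MCase G' br)
  | red_case_branch k j r a br i E' :
      red (br i) E' ->
      red (MCase (MVar k j r a) br) (MCase (MVar k j r a) (upd br i E')).

Definition reds : mexp -> mexp -> Prop := clos_refl_trans mexp red.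

Definition approx (T u : mexp) : Prop :=
  nsp_e u /\ fin_e u /\ exists T', reds T T' /\ le_e u T'.

Definition denot (T t : mexp) : Prop :=
  nsp_e t /\
  (forall u, approx T u -> le_e u t) /\
  (forall t', nsp_e t' -> (forall u, approx T u -> le_e u t') -> le_e t t').

CoFixpoint repl_leaves (e : nat -> mexp) (t : mexp) : mexp :=
  match t with
  | MNum n => e n
  | MCase g br => MCase g (fun i => repl_leaves e (br i))
  | t' => t'
  end.

(* Main.v *)
Require Import Defs.
From Stdlib Require Import Arith Relations Lia FunctionalExtensionality.

Lemma nsp_coind_e (P : mproc -> Prop) (Q : mexp -> Prop)
  (HP : forall p, P p -> exists r e, p = MLam r e /\ Q e)
  (HQ : forall e, Q e -> e = MBot \/ (exists n, e = MNum n) \/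
     exists k j r a br, e = MCase (MVar k j r a) br /\ (forall i, i < r -> P (a i)) /\ (forall i, Q (br i))) :
  forall e, Q e -> nsp_e e.
Proof.
  cofix CE. intros e H. destruct (HQ e H) as [-> | [[n ->] | (k&j&r&a&br&->&Ha&Hb)]].
  - constructor.
  - constructor.
  - constructor; intros.
    + destruct (HP _ (Ha i H0)) as (r'&e'&Heq&He'). rewrite Heq. constructor. apply CE; auto.
    + apply CE; auto.
Qed.

Lemma le_coind (Rp : mproc -> mproc -> Prop) (Re : mexp -> mexp -> Prop)
  (HP : forall p p', Rp p p' -> exists r e e', p = MLam r e /\ p' = MLam r e' /\ Re e e')
  (HQ : forall x y, Re x y -> x = MBot \/ (exists n, x = MNum n /\ y = MNum n) \/
     (exists g g' br br', x = MCase g br /\ y = MCase g' br' /\ Re g g' /\ forall i, Re (br i) (br' i)) \/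
     (exists k j r a a', x = MVar k j r a /\ y = MVar k j r a' /\ forall i, i < r -> Rp (a i) (a' i)) \/
     (exists p p' r a a', x = MApp p r a /\ y = MApp p' r a' /\ Rp p p' /\ forall i, i < r -> Rp (a i) (a' i))) :
  (forall x y, Re x y -> le_e x y) /\ (forall p p', Rp p p' -> le_p p p').
Proof.
  assert (CP : forall (CE : forall x y, Re x y -> le_e x y) p p', Rp p p' -> le_p p p').
  { intros CE p p' H. destruct (HP _ _ H) as (r&e&e'&->&->&He). constructor. apply CE; auto. }
  assert (CE : forall x y, Re x y -> le_e x y).
  { cofix CE. intros x y H.
    destruct (HQ x y H) as [-> | [(n&->&->) | [(g&g'&br&br'&->&->&Hg&Hb) | [(k&j&r&a&a'&->&->&Ha) | (p&p'&r&a&a'&->&->&Hp&Ha)]]]].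
    - constructor.
    - constructor.
    - constructor; auto.
    - constructor; intros. destruct (HP _ _ (Ha i H0)) as (r'&e&e'&->&->&He). constructor. apply CE; auto.
    - constructor; intros.
      + destruct (HP _ _ Hp) as (r'&e&e'&->&->&He). constructor. apply CE; auto.
      + destruct (HP _ _ (Ha i H0)) as (r'&e&e'&->&->&He). constructor. apply CE; auto. }
  split; auto.
Qed.

Lemma le_refl_both : (forall x, le_e x x) /\ (forall p, le_p p p).
Proof.
  destruct (le_coind (fun p p' => p = p') (fun x y => x = y)) as [A B].
  - intros p p' ->. destruct p' as [r e]. eauto 6.
  - intros x y ->. destruct y.
    + auto.
    + right; left; eauto.
    + right; right; left; eauto 10.
    + right; right; right; left; eauto 10.
    + right; right; right; right; eauto 12.
  - split; intros; auto.
Qed.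
Lemma le_e_refl x : le_e x x. Proof. apply le_refl_both. Qed.
Lemma le_p_refl x : le_p x x. Proof. apply le_refl_both. Qed.

Lemma le_trans_both :
  (forall x z, (exists y, le_e x y /\ le_e y z) -> le_e x z) /\
  (forall p q, (exists y, le_p p y /\ le_p y q) -> le_p p q).
Proof.
  destruct (le_coind (fun p q => exists y, le_p p y /\ le_p y q) (fun x z => exists y, le_e x y /\ le_e y z)) as [A B].
  - intros p q (y&H1&H2). inversion H1; subst. inversion H2; subst. eauto 8.
  - intros x z (y&H1&H2). inversion H1; subst.
    + auto.
    + inversion H2; subst. right; left; eauto.
    + inversion H2; subst. right; right; left. do 4 eexists; repeat split; eauto.
    + inversion H2; subst. right; right; right; left. do 5 eexists; repeat split; eauto.
    + inversion H2; subst. right; right; right; right. do 5 eexists; repeat split; eauto.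
  - split; auto.
Qed.
Lemma le_e_trans x y z : le_e x y -> le_e y z -> le_e x z.
Proof. intros; apply le_trans_both; eauto. Qed.
Lemma le_p_trans x y z : le_p x y -> le_p y z -> le_p x z.
Proof. intros; apply le_trans_both; eauto. Qed.

Definition frob (e : mexp) : mexp :=
  match e with
  | MBot => MBot | MNum n => MNum n | MCase g br => MCase g br
  | MVar k j r a => MVar k j r a | MApp p r a => MApp p r a end.
Lemma frob_eq e : e = frob e. Proof. destruct e; reflexivity. Qed.

Lemma repl_num e n : repl_leaves e (MNum n) = e n.
Proof. rewrite (frob_eq (repl_leaves e (MNum n))). simpl. destruct (e n); reflexivity. Qed.
Lemma repl_bot e : repl_leaves e MBot = MBot.
Proof. rewrite (frob_eq (repl_leaves e MBot)). reflexivity. Qed.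
Lemma repl_case e g br : repl_leaves e (MCase g br) = MCase g (fun i => repl_leaves e (br i)).
Proof. rewrite (frob_eq (repl_leaves e (MCase g br))). reflexivity. Qed.

Lemma nsp_repl e d : nsp_e d -> (forall i, nsp_e (e i)) -> nsp_e (repl_leaves e d).
Proof.
  intros Hd He.
  apply (nsp_coind_e nsp_p (fun t => nsp_e t \/ exists d, nsp_e d /\ t = repl_leaves e d)).
  - intros p Hp. inversion Hp; subst. eauto.
  - intros t [Ht | (d'&Hd'&->)].
    + inversion Ht; subst; [left; auto | right; left; eauto | ].
      right; right. do 5 eexists; split; [reflexivity|]. split; auto.
    + inversion Hd'; subst.
      * rewrite repl_bot; left; auto.
      * rewrite repl_num. specialize (He n). inversion He; subst; [left; auto | right; left; eauto | ].
        right; right. do 5 eexists; split; [reflexivity|]. split; auto.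
      * rewrite repl_case. right; right. do 5 eexists; split; [reflexivity|]. split; auto.
        intros i. right; eauto.
  - right; eauto.
Qed.

Definition botp (p : mproc) : mproc := match p with MLam r _ => MLam r MBot end.
Lemma botp_le p : le_p (botp p) p. Proof. destruct p; constructor; constructor. Qed.
Lemma botp_nsp p : nsp_p (botp p). Proof. destruct p; constructor; constructor. Qed.
Lemma botp_fin p : fin_p (botp p). Proof. destruct p; constructor; constructor. Qed.

Lemma upd_eq {A} (f : nat -> A) i x : upd f i x i = x.
Proof. unfold upd. rewrite Nat.eqb_refl. auto. Qed.
Lemma upd_neq {A} (f : nat -> A) i x i' : i' <> i -> upd f i x i' = f i'.
Proof. intros. unfold upd. apply Nat.eqb_neq in H. rewrite H. auto. Qed.
Lemma upd_cases {A} (P : A -> Prop) (f : nat -> A) i x i' : P x -> P (f i') -> P (upd f i x i').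
Proof. unfold upd. destruct (i' =? i); auto. Qed.

Definition vu k j r a br := MCase (MVar k j r a) br.

Lemma u_props k j r a br :
  (forall i, i < r -> nsp_p (a i) /\ fin_p (a i)) ->
  (forall i, nsp_e (br i) /\ fin_e (br i)) -> (exists N, forall i, N <= i -> br i = MBot) ->
  nsp_e (MCase (MVar k j r a) br) /\ fin_e (MCase (MVar k j r a) br).
Proof.
  intros Ha Hb HN. split.
  - constructor; intros; [apply Ha | apply Hb]; auto.
  - constructor; auto. constructor. intros; apply Ha; auto. intros; apply Hb.
Qed.

Definition ALe t t' := nsp_e t /\ forall u, nsp_e u -> fin_e u -> le_e u t -> le_e u t'.
Definition ALp p p' := nsp_p p /\ forall v, nsp_p v -> fin_p v -> le_p v p -> le_p v p'.

Lemma algebraic_both : (forall t t', (ALe t t' \/ exists k j r a a', t = MVar k j r a /\ t' = MVar k j r a' /\ forall i, i < r -> ALp (a i) (a' i)) -> le_e t t') /\ (forall p p', ALp p p' -> le_p p p').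
Proof.
  apply le_coind.
  - intros p p' [Hn H]. inversion Hn; subst.
    assert (Hl : le_p (MLam r MBot) p').
    { apply H; repeat constructor. }
    inversion Hl; subst. do 3 eexists; split; [reflexivity|]. split; [reflexivity|].
    left. split; auto. intros u Hu Hf Hle.
    assert (H2 : le_p (MLam r u) (MLam r e')). { apply H; constructor; auto. }
    inversion H2; subst; auto.
  - intros t t' [[Hn H] | (k&j&r&a&a'&->&->&Ha)].
    2:{ right; right; right; left. do 5 eexists; split; [reflexivity|]. split; [reflexivity|]. auto. }
    inversion Hn as [ | n | k j r a br Ha Hb]; subst.
    + auto.
    + right; left. exists n; split; auto.
      assert (H0 : le_e (MNum n) t') by (apply H; constructor).
      inversion H0; auto.
    + right; right; left.
      set (a0 := fun i => botp (a i)).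
      assert (Ha0 : forall i, i < r -> nsp_p (a0 i) /\ fin_p (a0 i)).
      { intros; split; [apply botp_nsp | apply botp_fin]. }
      assert (Hu : forall (a1 : nat -> mproc) br1, (forall i, i < r -> nsp_p (a1 i) /\ fin_p (a1 i) /\ le_p (a1 i) (a i)) ->
                  (forall i, nsp_e (br1 i) /\ fin_e (br1 i) /\ le_e (br1 i) (br i)) ->
                  (exists N, forall i, N <= i -> br1 i = MBot) ->
                  le_e (MCase (MVar k j r a1) br1) t').
      { intros a1 br1 H1 H2 H3. apply H.
        - apply u_props; auto. intros i Hi; split; apply H1; auto. intros i; split; apply H2.
        - apply u_props; auto. intros i Hi; split; apply H1; auto. intros i; split; apply H2.
        - constructor. constructor. intros; apply H1; auto. intros; apply H2. }
      assert (H0 : le_e (MCase (MVar k j r a0) (fun _ => MBot)) t').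
      { apply Hu. intros; repeat split; try apply Ha0; auto. apply botp_le.
        intros; repeat split; constructor. exists 0; auto. }
      inversion H0 as [ | | g0 g' br0 br' Hg Hbr | | ]; subst. inversion Hg as [| | | k0 j0 r0 a00 a' Ha' | ]; subst.
      do 4 eexists; split; [reflexivity|]. split; [reflexivity|]. split.
      * right. do 5 eexists; split; [reflexivity|]. split; [reflexivity|].
        intros i Hi. split; auto. intros v Hv Hvf Hvle.
        assert (H3 : le_e (MCase (MVar k j r (upd a0 i v)) (fun _ => MBot)) (MCase (MVar k j r a') br')).
        { apply Hu.
          - intros i' Hi'. unfold upd. destruct (Nat.eqb_spec i' i); subst; auto.
            repeat split; try apply Ha0; auto. apply botp_le.
          - intros; repeat split; constructor.
          - exists 0; auto. }
        inversion H3 as [ | | g1 g1' br1 br1' Hg1 Hbr1 | | ]; subst.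
        inversion Hg1 as [| | | k1 j1 r1 a1 a1' Ha1 | ]; subst.
        specialize (Ha1 i Hi). rewrite upd_eq in Ha1. auto.
      * intros i. left. split; auto. intros v Hv Hvf Hvle.
        assert (H3 : le_e (MCase (MVar k j r a0) (upd (fun _ => MBot) i v)) (MCase (MVar k j r a') br')).
        { apply Hu.
          - intros; repeat split; try apply Ha0; auto. apply botp_le.
          - intros i'. unfold upd. destruct (Nat.eqb_spec i' i); subst; auto.
            repeat split; constructor.
          - exists (S i). intros i' Hi'. unfold upd. destruct (Nat.eqb_spec i' i); auto. lia. }
        inversion H3 as [ | | g1 g1' br1 br1' Hg1 Hbr1 | | ]; subst.
        specialize (Hbr1 i). rewrite upd_eq in Hbr1. auto.
Qed.

Lemma algebraic t t' : nsp_e t -> (forall u, nsp_e u -> fin_e u -> le_e u t -> le_e u t') -> le_e t t'.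
Proof. intros. apply algebraic_both. left. split; auto. Qed.

Scheme red_ind2 := Induction for red Sort Prop
  with red_p_ind2 := Induction for red_p Sort Prop.

Lemma hred_var k j r a G : hred (MVar k j r a) G -> False.
Proof. intros H; inversion H. Qed.

Lemma hred_nsp E E' : hred E E' -> nsp_e E -> False.
Proof.
  intros H Hn. inversion H; subst; inversion Hn; subst. eapply hred_var; eauto.
Qed.

Definition PE (E E' : mexp) : Prop :=
  (nsp_e E -> nsp_e E' /\ le_e E' E) /\
  (forall k j r a, E = MVar k j r a -> (forall i, i < r -> nsp_p (a i)) ->
     exists a', E' = MVar k j r a' /\ forall i, i < r -> nsp_p (a' i) /\ le_p (a' i) (a i)).
Definition PP (p p' : mproc) : Prop := nsp_p p -> nsp_p p' /\ le_p p' p.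

Lemma red_PE : forall E E', red E E' -> PE E E'.
Proof.
  apply (red_ind2 (fun E E' _ => PE E E') (fun p p' _ => PP p p')).
  - intros E E' H. split.
    + intros Hn; exfalso; eapply hred_nsp; eauto.
    + intros; subst; exfalso; eapply hred_var; eauto.
  - intros k j r a i p' Hr IH. split.
    + intros Hn; inversion Hn.
    + intros k0 j0 r0 a0 Heq Ha. inversion Heq; subst. eexists; split; [reflexivity|].
      intros i' Hi'. unfold upd. destruct (Nat.eqb_spec i' i); subst.
      * apply IH. auto.
      * split; auto. apply le_p_refl.
  - intros k j r a G' br Hr IH. split.
    + intros Hn. inversion Hn as [| | k0 j0 r0 a0 br0 Ha0 Hb0]; subst.
      destruct (proj2 IH k j r a eq_refl Ha0) as (a'&->&Ha').
      split.
      * constructor; auto. intros; apply Ha'; auto.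
      * constructor. constructor. intros; apply Ha'; auto. intros; apply le_e_refl.
    + intros; discriminate.
  - intros k j r a br i E' Hr IH. split.
    + intros Hn. inversion Hn as [| | k0 j0 r0 a0 br0 Ha0 Hb0]; subst. destruct (proj1 IH (Hb0 i)) as [Hn' Hl]. split.
      * constructor; auto. intros i'. unfold upd. destruct (Nat.eqb_spec i' i); subst; auto.
      * constructor. apply le_e_refl. intros i'. unfold upd. destruct (Nat.eqb_spec i' i); subst; auto.
        apply le_e_refl.
    + intros; discriminate.
  - intros r E E' Hr IH Hn. unfold PP in *. inversion Hn; subst. destruct (proj1 IH H0). split; constructor; auto.
Qed.

Lemma red_nsp E E' : red E E' -> nsp_e E -> nsp_e E' /\ le_e E' E.
Proof. intros H; apply (red_PE _ _ H). Qed.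

Inductive St (e : nat -> mexp) : mexp -> mexp -> Prop :=
| st_init d : St e d (MCase d e)
| st_num n T : nsp_e T -> le_e T (e n) -> St e (MNum n) T
| st_bot : St e MBot MBot
| st_case k j r a br a' br' :
    (forall i, i < r -> nsp_p (a' i) /\ le_p (a' i) (a i)) ->
    (forall i, St e (br i) (br' i)) ->
    St e (MCase (MVar k j r a) br) (MCase (MVar k j r a') br').

Lemma st_red e d T : St e d T -> nsp_e d -> (forall i, nsp_e (e i)) -> forall T', red T T' -> St e d T'.
Proof.
  induction 1; intros Hd He T' Hr.
  - inversion Hd; subst.
    + inversion Hr; subst. inversion H; subst.
      * constructor.
      * inversion H3.
    + inversion Hr; subst. inversion H; subst.
      * constructor; auto. apply le_e_refl.
      * inversion H3.
    + inversion Hr; subst. inversion H1; subst.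
      * constructor. intros; split; auto. apply le_p_refl.
        intros; constructor.
      * exfalso; eapply hred_nsp; eauto.
  - destruct (red_nsp _ _ Hr H). constructor; auto. eapply le_e_trans; eauto.
  - inversion Hr; subst. inversion H.
  - inversion Hd; subst.
    inversion Hr; subst.
    + match goal with Hm : hred _ _ |- _ => inversion Hm; subst end.
      match goal with Hm : hred (MVar _ _ _ _) _ |- _ => eapply hred_var in Hm; contradiction end.
    + match goal with Hm : red (MVar _ _ _ _) _ |- _ => destruct (proj2 (red_PE _ _ Hm) k j r a' eq_refl) as (a''&->&Ha'') end.
      { intros; apply H; auto. }
      constructor; auto. intros i Hi. destruct (Ha'' i Hi), (H i Hi). split; auto. eapply le_p_trans; eauto.
    + constructor; auto. intros i'. unfold upd. destruct (Nat.eqb_spec i' i); subst; auto.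
Qed.

Lemma st_below e d T : St e d T -> nsp_e d -> forall u, nsp_e u -> le_e u T -> le_e u (repl_leaves e d).
Proof.
  induction 1; intros Hd u Hu Hle.
  - inversion Hu; subst; try constructor.
    + inversion Hle.
    + inversion Hle; subst. inversion H4; subst. inversion Hd.
  - rewrite repl_num. eapply le_e_trans; eauto.
  - inversion Hle; subst. constructor.
  - rewrite repl_case. inversion Hd as [| | k0 j0 r0 a0 br0 Ha0 Hb0]; subst.
    inversion Hu as [| | k1 j1 r1 a1 br1 Ha1 Hb1]; subst; [constructor | inversion Hle | ].
    inversion Hle as [ | | g g' bu bu' Hg Hbu | | ]; subst.
    inversion Hg as [| | | k2 j2 r2 a2 a2' Ha2 | ]; subst. constructor.
    * constructor. intros i Hi. eapply le_p_trans. apply Ha2; auto. apply H; auto.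
    * intros i. apply H1; auto.
Qed.

Lemma reds_st e d T : reds (MCase d e) T -> nsp_e d -> (forall i, nsp_e (e i)) -> St e d T.
Proof.
  intros H Hd He. apply clos_rt_rtn1 in H. induction H.
  - constructor.
  - eapply st_red; eauto.
Qed.

Lemma reds_branch V B i Y : (exists k j r a, V = MVar k j r a) -> reds (B i) Y -> reds (MCase V B) (MCase V (upd B i Y)).
Proof.
  intros (k&j&r&a&->) H. apply clos_rt_rtn1 in H. induction H.
  - replace (upd B i (B i)) with B. apply rt_refl.
    apply functional_extensionality; intros n. unfold upd. destruct (Nat.eqb_spec n i); subst; auto.
  - eapply rt_trans. apply IHclos_refl_trans_n1. apply rt_step.
    replace (upd B i z) with (upd (upd B i y) i z).
    + apply red_case_branch. rewrite upd_eq. auto.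
    + apply functional_extensionality; intros n. unfold upd. destruct (Nat.eqb_spec n i); subst; auto.
Qed.

Lemma approx_build e : (forall i, nsp_e (e i)) -> forall u, fin_e u -> forall d, nsp_e d -> nsp_e u ->
  le_e u (repl_leaves e d) -> exists T, reds (MCase d e) T /\ le_e u T.
Proof.
  intros He u Hf. induction Hf; intros d Hd Hu Hle.
  - exists (MCase d e). split; [apply rt_refl | constructor].
  - inversion Hd; subst.
    + rewrite repl_bot in Hle. inversion Hle.
    + rewrite repl_num in Hle. exists (e n0). split; auto. apply rt_step. apply red_head. constructor.
    + rewrite repl_case in Hle. inversion Hle.
  - inversion Hd; subst.
    + rewrite repl_bot in Hle. inversion Hle.
    + rewrite repl_num in Hle. exists (e n). split; auto. apply rt_step. apply red_head. constructor.
    + rewrite repl_case in Hle. inversion Hle; subst. inversion Hu; subst.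
      destruct H1 as [N HN].
      assert (Hseq : forall M, exists br', reds (MCase (MVar k j r a) (fun i => MCase (br0 i) e)) (MCase (MVar k j r a) br') /\
                forall i, (i < M -> le_e (br i) (br' i)) /\ (M <= i -> br' i = MCase (br0 i) e)).
      { induction M.
        - exists (fun i => MCase (br0 i) e). split; [apply rt_refl|]. intros; split; auto; lia.
        - destruct IHM as (br'&Hr&Hb).
          destruct (H0 M (br0 M) (H3 M) (H8 M) (H9 M)) as (TM&HTM&HlM).
          exists (upd br' M TM). split.
          + eapply rt_trans; [apply Hr|]. apply reds_branch; eauto. rewrite (proj2 (Hb M)); auto.
          + intros i; split; intros Hi; unfold upd; destruct (Nat.eqb_spec i M); subst; auto.
            * apply Hb; lia.
            * lia.
            * apply Hb; lia. }
      destruct (Hseq N) as (br'&Hr&Hb). exists (MCase (MVar k j r a) br'). split.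
      * eapply rt_trans; [|apply Hr]. apply rt_step, red_head. constructor.
      * constructor; auto. intros i. destruct (Nat.lt_ge_cases i N).
        apply Hb; auto. rewrite HN; auto. constructor.
  - inversion Hu.
  - inversion Hu.
Qed.

Theorem lemma3p4 (d : mexp) (e : nat -> mexp) :
  nsp_e d -> (forall i, nsp_e (e i)) ->
  denot (MCase d e) (repl_leaves e d).
Proof.
  intros Hd He. split; [|split].
  - apply nsp_repl; auto.
  - intros u (Hu&Hf&T'&Hr&Hle). eapply st_below; eauto. apply reds_st; auto.
  - intros t' Ht' H. apply algebraic. apply nsp_repl; auto.
    intros u Hu Hf Hle. apply H. split; auto. split; auto.
    eapply approx_build; eauto.
Qed.
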